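(* Let $\Bbbk$ be a field of characteristic zero, $\lambda\in\Bbbk^*$ and $a\in\Bbbk$. If $\lambda\neq\pm1$ and $a\neq0$, then the $\mathcal O$-module $\Omega(\lambda,a)$ is irreducible.
   Context: $\mathcal O$ is the Lie algebra with basis $\mathcal O_n$ ($n\ge1$) and bracket $[\mathcal O_n,\mathcal O_m]=(n-m)\mathcal O_{n+m}-(n+m)\mathcal O_{n-m}$, where $\mathcal O_0=0$ and $\mathcal O_{-k}=-\mathcal O_k$ (it is the span of $L_n-L_{-n}$, $n\ge1$, in the Witt algebra). $\Omega(\lambda,a)$ is $\Bbbk[X]$ with action $\mathcal O_n\cdot f(X)=\lambda^n(X+na)f(X+n)-\lambda^{-n}(X-na)f(X-n)$ for $n\ge1$. *)

(* Defs.v *)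
From HB Require Import structures.
From mathcomp Require Import all_boot all_order all_algebra.
Set Implicit Arguments. Unset Strict Implicit. Unset Printing Implicit Defensive.
Import GRing.Theory.
Local Open Scope ring_scope.

(* Action of the basis element O_n (n >= 1) on Omega(lambda, a) = K[X]:
   O_n . f(X) = lambda^n (X + n a) f(X + n) - lambda^{-n} (X - n a) f(X - n).
   Note: p \Po q is the composition p(q). *)
Definition Oact (K : fieldType) (l a : K) (n : nat) (f : {poly K}) : {poly K} :=
  l ^+ n *: (('X + (n%:R * a)%:P) * (f \Po ('X + (n%:R)%:P)))
  - l ^- n *: (('X - (n%:R * a)%:P) * (f \Po ('X - (n%:R)%:P))).

(* An O-submodule of Omega(lambda,a): a K-subspace stable under all O_n, n >= 1
   (these span O, so this is exactly stability under O). *)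
Definition Omega_submodule (K : fieldType) (l a : K) (S : {poly K} -> Prop) : Prop :=
  [/\ S 0,
      (forall f g, S f -> S g -> S (f + g)),
      (forall (c : K) f, S f -> S (c *: f)) &
      (forall (n : nat) f, (0 < n)%N -> S f -> S (Oact l a n f))].

Definition Omega_irreducible (K : fieldType) (l a : K) : Prop :=
  (exists f : {poly K}, f != 0) /\
  forall S : {poly K} -> Prop, Omega_submodule l a S ->
    (forall f, S f -> f = 0) \/ (forall f, S f).

(* Main.v *)
Require Import Defs.
From HB Require Import structures.
From mathcomp Require Import all_boot all_order all_algebra.
From mathcomp Require Import ring zify.
From Stdlib Require Import FunctionalExtensionality Classical.
Import GRing.Theory.
Local Open Scope ring_scope.

Section Delta.
Variable R : comNzRingType.
Definition delta (P : {poly R}) : {poly R} := P \Po ('X + 1) - P.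

Lemma deltaC c : delta c%:P = 0.
Proof. by rewrite /delta comp_polyC subrr. Qed.

Lemma deltaD P Q : delta (P + Q) = delta P + delta Q.
Proof. rewrite /delta comp_polyD; ring. Qed.

Lemma deltaMX Q : delta (Q * 'X) = delta Q * ('X + 1) + Q.
Proof. rewrite /delta comp_polyM comp_polyX; ring. Qed.

Lemma decompX (P : {poly R}) : P = drop_poly 1 P * 'X + (P`_0)%:P.
Proof.
rewrite -{1}(poly_take_drop 1 P) expr1 addrC; congr (_ + _).
rewrite (size1_polyC (size_take_poly 1 P)); congr (_%:P).
by rewrite coef_take_poly.
Qed.

Lemma delta_size k (P : {poly R}) : (size P <= k.+1)%N -> (size (delta P) <= k)%N.
Proof.
elim: k P => [|k IH] P hP.
  by rewrite (size1_polyC hP) deltaC size_poly0.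
rewrite (decompX P) deltaD deltaC addr0 deltaMX.
have hQ : (size (drop_poly 1 P) <= k.+1)%N by rewrite size_drop_poly; lia.
apply: leq_trans (size_polyD _ _) _; rewrite geq_max hQ andbT.
apply: leq_trans (size_polyMleq _ _) _; rewrite size_XaddC.
have := IH _ hQ; lia.
Qed.

Lemma delta_coef k (P : {poly R}) : (size P <= k.+2)%N ->
  (delta P)`_k = k.+1%:R * P`_k.+1.
Proof.
elim: k P => [|k IH] P hP.
  rewrite {1}(decompX P) deltaD deltaC addr0 deltaMX coefD.
  have hQ : (size (drop_poly 1 P) <= 1)%N by rewrite size_drop_poly; lia.
  have h0 := delta_size _ _ hQ. move: h0; rewrite size_poly_leq0 => /eqP ->.
  by rewrite mul0r coef0 add0r coef_drop_poly mul1r.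
rewrite {1}(decompX P) deltaD deltaC addr0 deltaMX coefD.
have hQ : (size (drop_poly 1 P) <= k.+2)%N by rewrite size_drop_poly; lia.
rewrite mulrDr mulr1 coefD coefMX /= IH //.
have -> : (delta (drop_poly 1 P))`_k.+1 = 0.
  by apply/leq_sizeP; [apply: delta_size hQ|].
rewrite addr0 !coef_drop_poly !addn1.
by rewrite [in RHS]mulrSr mulrDl mul1r.
Qed.

Lemma iter_delta k (P : {poly R}) : (size P <= k.+1)%N ->
  iter k delta P = (k`!%:R * P`_k)%:P.
Proof.
elim: k P => [|k IH] P hP.
  by rewrite /= fact0 mul1r -(size1_polyC hP).
rewrite iterSr IH; last exact: delta_size.
by rewrite delta_coef // mulrA -natrM factS mulnC.
Qed.
End Delta.
Arguments delta {R} _.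

Lemma iter_comm (T : Type) (f g : T -> T) : (forall x, f (g x) = g (f x)) ->
  forall i j x, iter i f (iter j g x) = iter j g (iter i f x).
Proof.
move=> fg.
have h1 : forall j x, f (iter j g x) = iter j g (f x).
  by elim=> [|j IH] x //=; rewrite fg IH.
elim=> [|i IH] j x //=.
by rewrite IH h1.
Qed.

Section Seqs.
Variable K : fieldType.
Definition Dl (u : nat -> {poly K}) : nat -> {poly K} := fun n => u n.+1 - u n.
Definition Em (m : K) (u : nat -> {poly K}) : nat -> {poly K} :=
  fun n => u n.+1 - m *: u n.

Lemma Dl_Em m u : Dl (Em m u) = Em m (Dl u).
Proof. apply: functional_extensionality => n; rewrite /Dl /Em scalerBr; ring. Qed.

Lemma Em_exp m j w : iter j (Em m) (fun n => m ^+ n.+1 *: w n) =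
  fun n => m ^+ (n.+1 + j) *: iter j Dl w n.
Proof.
elim: j => [|j IH] /=.
  by apply: functional_extensionality => n; rewrite addn0.
rewrite IH; apply: functional_extensionality => n.
rewrite /Em /Dl scalerBr scalerA -exprS addSn addnS.
by [].
Qed.

Lemma Em_const m j C : iter j (Em m) (fun _ => C) = fun _ => (1 - m) ^+ j *: C.
Proof.
elim: j => [|j IH] /=.
  by apply: functional_extensionality => n; rewrite expr0 scale1r.
rewrite IH; apply: functional_extensionality => n.
by rewrite /Em scalerA -scalerBl -{1}[(1 - m) ^+ j]mul1r -mulrBl exprS mulrC.
Qed.

Lemma iterB (F : (nat -> {poly K}) -> (nat -> {poly K})) :
  (forall u v, F (fun n => u n - v n) = fun n => F u n - F v n) ->
  forall j u v, iter j F (fun n => u n - v n) = fun n => iter j F u n - iter j F v n.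
Proof. by move=> hF; elim=> [|j IH] u v //=; rewrite IH hF. Qed.

Lemma DlB u v : Dl (fun n => u n - v n) = fun n => Dl u n - Dl v n.
Proof. apply: functional_extensionality => n; rewrite /Dl; ring. Qed.

Lemma EmB m u v : Em m (fun n => u n - v n) = fun n => Em m u n - Em m v n.
Proof. apply: functional_extensionality => n; rewrite /Em scalerBr; ring. Qed.

Lemma Dl0 j : iter j Dl (fun _ => 0) = fun _ => 0.
Proof.
elim: j => [|j IH] //=; rewrite IH.
by apply: functional_extensionality => n; rewrite /Dl subrr.
Qed.

Definition seqP (P : {poly {poly K}}) : nat -> {poly K} := fun n => P.[n.+1%:R].

Lemma Dl_seqP P : Dl (seqP P) = seqP (delta P).
Proof.
apply: functional_extensionality => n.
by rewrite /Dl /seqP /delta hornerD hornerN horner_comp hornerD hornerX hornerC -natr1.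
Qed.

Lemma iter_Dl_seqP j P : iter j Dl (seqP P) = seqP (iter j delta P).
Proof. by elim: j => [|j IH] //=; rewrite IH Dl_seqP. Qed.
End Seqs.
Arguments Dl {K}.
Arguments Em {K}.
Arguments seqP {K}.
Arguments Dl_Em {K}.
Arguments Em_exp {K}.
Arguments Em_const {K}.
Arguments iterB {K}.
Arguments DlB {K}.
Arguments EmB {K}.
Arguments Dl0 {K}.
Arguments Dl_seqP {K}.
Arguments iter_Dl_seqP {K}.

Lemma coef_gt_size (K : fieldType) (p : {poly K}) i : p`_i != 0 -> (i < size p)%N.
Proof. by apply: contraR; rewrite -leqNgt => h; rewrite nth_default. Qed.

Lemma lin_comp (K : fieldType) (g : {poly K}) (c b : K) : g != 0 ->
  size (('X + c%:P) * (g \Po ('X + b%:P))) = (size g).+1 /\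
  (('X + c%:P) * (g \Po ('X + b%:P)))`_(size g) = lead_coef g.
Proof.
move=> g0.
have s2 : (1 < size ('X + b%:P)%R)%N by rewrite size_XaddC.
have lc : lead_coef (g \Po ('X + b%:P)) = lead_coef g.
  by rewrite lead_coef_comp // lead_coefXaddC expr1n mulr1.
have c0 : g \Po ('X + b%:P) != 0.
  by rewrite -lead_coef_eq0 lc lead_coef_eq0.
have sc : size (g \Po ('X + b%:P)) = size g.
  have := size_comp_poly g ('X + b%:P); rewrite size_XaddC muln1 => h.
  move: c0 g0; rewrite -!size_poly_gt0; by move=> p1 p2; rewrite -(prednK p1) -(prednK p2) h.
have X0 : 'X + c%:P != 0 by rewrite -size_poly_gt0 size_XaddC.
have sz : size (('X + c%:P) * (g \Po ('X + b%:P))) = (size g).+1.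
  by rewrite size_mul // (size_XaddC c) sc.
split => //.
have := lead_coefM ('X + c%:P) (g \Po ('X + b%:P)).
by rewrite lead_coefXaddC mul1r lc lead_coefE sz.
Qed.

Lemma l_neq_inv (K : fieldType) (l : K) : l != 0 -> l != 1 -> l != -1 -> l - l^-1 != 0.
Proof.
move=> l0 l1 lm1; apply/negP => /eqP h.
have : l ^+ 2 == 1.
  by rewrite expr2 -{2}(subr0 l) -h opprB addrC subrK mulfV.
by rewrite sqrf_eq1 (negPf l1) (negPf lm1).
Qed.

Lemma size_Oact1 (K : fieldType) (l a : K) (g : {poly K}) :
  l != 0 -> l != 1 -> l != -1 -> g != 0 -> size (Oact l a 1 g) = (size g).+1.
Proof.
move=> l0 l1 lm1 g0.
have [s1 c1] := @lin_comp _ g (1%:R * a) (1%:R) g0.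
have [s2 c2] := @lin_comp _ g (- (1%:R * a)) (- 1%:R) g0.
rewrite /Oact !polyCN -!/(_ - _) in s2 c2.
have hc : (Oact l a 1 g)`_(size g) != 0.
  rewrite /Oact coefB !coefZ c1 c2 -mulrBl mulf_neq0 ?lead_coef_eq0 //.
  by rewrite expr1 l_neq_inv.
apply/eqP; rewrite eqn_leq coef_gt_size // andbT.
rewrite /Oact; apply: leq_trans (size_polyD _ _) _.
rewrite size_polyN geq_max.
by rewrite (leq_trans (size_scale_leq _ _)) ?s1 // (leq_trans (size_scale_leq _ _)) ?s2.
Qed.

Lemma comp_lin (R : idomainType) (g : {poly R}) (b : R) : g != 0 ->
  size (g \Po ('X + b%:P)) = size g /\ lead_coef (g \Po ('X + b%:P)) = lead_coef g.
Proof.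
move=> g0.
have s2 : (1 < size ('X + b%:P)%R)%N by rewrite size_XaddC.
have lc : lead_coef (g \Po ('X + b%:P)) = lead_coef g.
  by rewrite lead_coef_comp // lead_coefXaddC expr1n mulr1.
have c0 : g \Po ('X + b%:P) != 0.
  by rewrite -lead_coef_eq0 lc lead_coef_eq0.
split => //.
have := size_comp_poly g ('X + b%:P); rewrite size_XaddC muln1 => h.
move: c0 g0; rewrite -!size_poly_gt0.
by move=> p1 p2; rewrite -(prednK p1) -(prednK p2) h.
Qed.

Lemma lin2 (R : idomainType) (c e : R) : (size (c%:P - e%:P * 'X)%R <= 2)%N.
Proof.
apply: leq_trans (size_polyD _ _) _; rewrite size_polyN geq_max.
rewrite (leq_trans (size_polyC_leq1 _)) //=.
apply: leq_trans (size_polyMleq _ _) _; rewrite size_polyX.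
by have := size_polyC_leq1 e; case: (size _) => [|[]].
Qed.

Section Main.
Variables (K : fieldType) (l a : K).
Hypotheses (ch : [pchar K] =i pred0) (l0 : l != 0) (l1 : l != 1) (lm1 : l != -1)
  (a0 : a != 0).
Variable S : {poly K} -> Prop.
Hypothesis hS : Omega_submodule l a S.

Lemma S0 : S 0. Proof. by case: hS. Qed.
Lemma SD f g : S f -> S g -> S (f + g). Proof. by case: hS => _ h _ _; apply: h. Qed.
Lemma SZ c f : S f -> S (c *: f). Proof. by case: hS => _ _ h _; apply: h. Qed.
Lemma SO n f : (0 < n)%N -> S f -> S (Oact l a n f).
Proof. by case: hS => _ _ _ h; apply: h. Qed.
Lemma SB f g : S f -> S g -> S (f - g).
Proof. by move=> hf hg; rewrite -scaleN1r; apply: SD => //; apply: SZ. Qed.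

Lemma S_Em m u : (forall n, S (u n)) -> forall j n, S (iter j (Em m) u n).
Proof.
move=> hu; elim=> [|j IH] n //=.
by rewrite /Em; apply: SB => //; apply: SZ.
Qed.

Lemma S_Dl u : (forall n, S (u n)) -> forall j n, S (iter j Dl u n).
Proof.
move=> hu; elim=> [|j IH] n //=.
by rewrite /Dl; apply: SB.
Qed.

Section Key.
Variable f : {poly K}.
Let x : {poly {poly K}} := ('X : {poly K})%:P.
Let F : {poly {poly K}} := map_poly polyC f.
Let P : {poly {poly K}} := ((a%:P)%:P * 'X + x) * (F \Po ('X + x)).
Let Q : {poly {poly K}} := (x - (a%:P)%:P * 'X) * (F \Po (x - 'X)).
Let mu : K := (l^-1) ^+ 2.

Lemma P_eval (m : nat) :
  P.[m%:R] = ('X + (m%:R * a)%:P) * (f \Po ('X + (m%:R)%:P)).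
Proof.
rewrite /P hornerM hornerD hornerM !hornerC hornerX horner_comp hornerD hornerX hornerC.
rewrite -polyC_natr -polyCM [a * _]mulrC [_ + 'X]addrC [(m%:R)%:P + 'X]addrC.
by [].
Qed.

Lemma Q_eval (m : nat) :
  Q.[m%:R] = ('X - (m%:R * a)%:P) * (f \Po ('X - (m%:R)%:P)).
Proof.
rewrite /Q hornerM hornerD hornerN hornerM !hornerC hornerX horner_comp hornerD hornerN hornerX hornerC.
rewrite -polyC_natr -polyCM [a * _]mulrC. by [].
Qed.

Lemma h_eq n : l ^- n.+1 *: Oact l a n.+1 f = seqP P n - mu ^+ n.+1 *: seqP Q n.
Proof.
rewrite /Oact /seqP P_eval Q_eval scalerBr !scalerA mulVf ?expf_neq0 // scale1r.
congr (_ - _ *: _).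
by rewrite /mu -exprVn -exprM mulnC exprM exprVn expr2.
Qed.
Hypothesis f0 : f != 0.
Let d := (size f).-1.
Lemma sizef : size f = d.+1.
Proof. by rewrite /d prednK // size_poly_gt0. Qed.

Lemma P_size : size P = d.+2 /\ P`_d.+1 = (a * lead_coef f)%:P.
Proof.
have F0 : F != 0 by rewrite map_poly_eq0.
have [sB lB] := @comp_lin _ F ('X : {poly K}) F0.
have sA : size ((a%:P)%:P * 'X + x) = 2.
  rewrite /x size_MXaddC !polyC_eq0 (negPf a0) /=.
  by rewrite size_polyC polyC_eq0 (negPf a0).
have A0 : (a%:P)%:P * 'X + x != 0 by rewrite -size_poly_gt0 sA.
have B0 : F \Po ('X + x) != 0 by rewrite -size_poly_gt0 sB size_poly_gt0.
have sPe : size P = d.+2.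
  by rewrite /P size_mul // sA sB size_map_polyC sizef.
split => //.
have := lead_coefM ((a%:P)%:P * 'X + x) (F \Po ('X + x)).
rewrite -/P lead_coefE sPe /= => ->.
rewrite lB lead_coef_map /= lead_coefE sA /= coefD coefMX /x coefC /= !coefC /= addr0.
by rewrite polyCM.
Qed.

Lemma Q_size : (size Q <= d.+2)%N.
Proof.
apply: leq_trans (size_polyMleq _ _) _.
have h1 := @lin2 _ ('X : {poly K}) (a%:P).
have h2 : (size (F \Po (x - 'X)) <= d.+1)%N.
  apply: leq_trans (size_comp_poly_leq _ _) _.
  have := @lin2 _ ('X : {poly K}) 1; rewrite mul1r -/x => h.
  rewrite size_map_polyC sizef /=.
  have : ((size (x - 'X)%R).-1 <= 1)%N by move: h; case: (size _) => [|[|[]]].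
  move=> h'; rewrite ltnS; apply: leq_trans (leq_mul (leqnn d) h') _; lia.
move: h1 h2; rewrite -/x; case: (size (x - _)) => [|[|[|]]] //=; 
  case: (size (F \Po _)) => //=; lia.
Qed.
Lemma mu1 : 1 - mu != 0.
Proof.
rewrite subr_eq0 eq_sym /mu sqrf_eq1 invr_eq1 (negPf l1) /=.
apply/negP => /eqP h; move: lm1; rewrite -[l]invrK h invrN1 eqxx //.
Qed.

Lemma S_one : S f -> S 1.
Proof.
move=> Sf.
pose h := fun n => l ^- n.+1 *: Oact l a n.+1 f.
have hh : forall n, S (h n) by move=> n; apply: SZ; apply: SO.
have := S_Dl _ (S_Em mu h hh d.+2) d.+1 0.
have -> : h = fun n => seqP P n - (fun n => mu ^+ n.+1 *: seqP Q n) n.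
  by apply: functional_extensionality => n; rewrite /h h_eq.
rewrite (iterB (Em mu) (EmB mu)) (iterB Dl DlB).
rewrite Em_exp iter_Dl_seqP (iter_delta _ _ _ (leq_trans Q_size (leqnSn _))).
have -> : Q`_d.+2 = 0 by apply/leq_sizeP; [exact: Q_size|].
have -> : (fun n => mu ^+ (n.+1 + d.+2) *: seqP ((d.+2)`!%:R * 0)%:P n) = fun _ => 0.
  by apply: functional_extensionality => n; rewrite mulr0 /seqP hornerC scaler0.
rewrite Dl0 subr0 (iter_comm _ _ _ (Dl_Em mu)) iter_Dl_seqP.
have [sP cP] := P_size.
rewrite (iter_delta _ _ _ (eq_leq sP)) cP.
have -> : seqP (((d.+1)`!%:R * (a * lead_coef f)%:P)%:P) =
   fun _ => (d.+1)`!%:R * (a * lead_coef f)%:P.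
  by apply: functional_extensionality => n; rewrite /seqP hornerC.
rewrite Em_const -polyC_natr -polyCM scale_polyC.
set k := (_ * _) => Sk.
have k0 : k != 0.
  rewrite /k mulf_neq0 ?expf_neq0 ?mu1 // mulf_neq0 ?mulf_neq0 ?lead_coef_eq0 //.
  by move/pcharf0P: ch => ->; rewrite -lt0n fact_gt0.
have := SZ k^-1 _ Sk. by rewrite scale_polyC mulVf // polyC1.
Qed.
End Key.
Fixpoint gk (k : nat) : {poly K} := if k is k'.+1 then Oact l a 1 (gk k') else 1.

Lemma gk_prop : S 1 -> forall k, S (gk k) /\ size (gk k) = k.+1.
Proof.
move=> S1; elim=> [|k [Sk sk]] /=; first by rewrite size_poly1.
split; first by apply: SO.
by rewrite size_Oact1 // ?sk // -size_poly_gt0 sk.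
Qed.

Lemma all_S : S 1 -> forall k (g : {poly K}), (size g <= k)%N -> S g.
Proof.
move=> S1; elim=> [|k IH] g hg.
  by move: hg; rewrite size_poly_leq0 => /eqP ->; apply: S0.
have [Sk sk] := gk_prop S1 k.
have L0 : lead_coef (gk k) != 0 by rewrite lead_coef_eq0 -size_poly_gt0 sk.
set c := g`_k / lead_coef (gk k).
have -> : g = (g - c *: gk k) + c *: gk k by rewrite subrK.
apply: SD; last by apply: SZ.
apply: IH; apply/leq_sizeP => j; rewrite leq_eqVlt => /orP [/eqP <-|hj].
  have e : lead_coef (gk k) = (gk k)`_k by rewrite lead_coefE sk.
  by rewrite coefB coefZ /c -e mulfVK // subrr.
rewrite coefB coefZ !nth_default ?mulr0 ?subr0 //; first by rewrite sk.
exact: leq_trans hg hj.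
Qed.
End Main.

Theorem proposition3p19 (K : fieldType) (l a : K) :
  [pchar K] =i pred0 -> l != 0 -> l != 1 -> l != -1 -> a != 0 ->
  Omega_irreducible l a.
Proof.
move=> ch l0 l1 lm1 a0; split; first by exists 1; rewrite oner_neq0.
move=> S hS.
case: (classic (exists f, S f /\ f != 0)) => [[f [Sf f0]]|hn].
  right => g.
  have S1 := @S_one K l a ch l0 l1 lm1 a0 S hS f f0 Sf.
  exact: (@all_S K l a l0 l1 lm1 S hS S1 (size g)).
left => f Sf; apply/eqP; apply/negPn/negP => f0; apply: hn; by exists f.
Qed.
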